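(* Let $\mathcal{M}=(M_i\colon i\in K)$ be a tight family of matroids on a common ground set $E$. Then every covering $(R_i\colon i\in K)$ of $\mathcal{M}$ is a partitioning of $\mathcal{M}$, i.e. the sets $R_i$ are pairwise disjoint, their union is $E$, and each $R_i$ is a base of $M_i$.
   Context: Matroids here are possibly infinite (given by independence axioms: $\emptyset$ independent, subsets of independent sets independent, the augmentation axiom relative to maximal independent sets, and that every independent subset of any $X\subseteq E$ extends to a maximal independent subset of $X$). Bases are maximal independent sets; circuits minimal dependent sets; $X$ spans $e$ if $e\in X$ or some circuit $C\ni e$ has $C\setminus\{e\}\subseteq X$; $S$ is spanning if it spans all of $E$. A covering of $\mathcal{M}$ is a family $(R_i\colon i\in K)$ with $R_i$ independent in $M_i$ and $\bigcup_i R_i=E$. The family $\mathcal{M}$ is tight if it admits a covering and for every covering $(R_i\colon i\in K)$ each $R_i$ is spanning in $M_i$. *)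

(* Defs.v *)
(* Sets over a ground type E are predicates E -> Prop;
   the ground set of every matroid is the whole type E. *)

Definition set (E : Type) := E -> Prop.

Definition subset {E : Type} (A B : set E) : Prop := forall x, A x -> B x.

Definition set0 {E : Type} : set E := fun _ => False.

Definition add1 {E : Type} (A : set E) (e : E) : set E := fun x => A x \/ x = e.

Definition maximal_in {E : Type} (P : set E -> Prop) (A : set E) : Prop :=
  P A /\ forall B, P B -> subset A B -> subset B A.

Record matroid (E : Type) := Matroid {
  indep : set E -> Prop;
  indep_empty : indep set0;
  indep_subset : forall I J, indep J -> subset I J -> indep I;
  indep_augment : forall I B,
      indep I -> ~ maximal_in indep I -> maximal_in indep B ->
      exists x, B x /\ ~ I x /\ indep (add1 I x);
  indep_maximal : forall I X, indep I -> subset I X ->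
      exists J, maximal_in (fun J => indep J /\ subset I J /\ subset J X) J
}.

Arguments indep {E} m _.

Definition base {E : Type} (M : matroid E) (B : set E) : Prop :=
  maximal_in (indep M) B.

Definition circuit {E : Type} (M : matroid E) (C : set E) : Prop :=
  ~ indep M C /\ forall D, subset D C -> ~ subset C D -> indep M D.

Definition spans {E : Type} (M : matroid E) (X : set E) (e : E) : Prop :=
  X e \/ exists C, circuit M C /\ C e /\ forall x, C x -> x <> e -> X x.

Definition spanning {E : Type} (M : matroid E) (S : set E) : Prop :=
  forall e, spans M S e.

Definition covering {E K : Type} (M : K -> matroid E) (R : K -> set E) : Prop :=
  (forall i, indep (M i) (R i)) /\ (forall e, exists i, R i e).

Definition tight {E K : Type} (M : K -> matroid E) : Prop :=
  (exists R, covering M R) /\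
  (forall R, covering M R -> forall i, spanning (M i) (R i)).

Definition partitioning {E K : Type} (M : K -> matroid E) (R : K -> set E) : Prop :=
  (forall i j, i <> j -> forall e, R i e -> R j e -> False) /\
  (forall e, exists i, R i e) /\
  (forall i, base (M i) (R i)).

(* Main.v *)
Require Import Defs.
From Stdlib Require Import Classical.

Lemma spanning_indep_sub {E : Type} (M : matroid E) (S X : set E) (e : E) :
  spans M S e -> ~ S e -> X e -> subset S X -> indep M X -> False.
Proof.
  intros [H|[C [HC [HCe HCs]]]] HnS HX HSX HI; [tauto|].
  apply (proj1 HC). apply (indep_subset _ M C X HI).
  intros x Hx. destruct (classic (x = e)) as [->|Hne]; auto.
Qed.

Theorem proposition3p3 (E K : Type) (M : K -> matroid E) :
  tight M -> forall R : K -> set E, covering M R -> partitioning M R.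
Proof.
  intros [_ Ht] R [HRi HRc]. split; [|split; [exact HRc|]].
  - intros i j Hij e Hi Hj.
    set (R' := fun k x => R k x /\ (k = i -> x <> e)).
    assert (Hc : covering M R').
    { split.
      - intro k. apply (indep_subset _ (M k) (R' k) (R k) (HRi k)). intros x [Hx _]; exact Hx.
      - intro x. destruct (classic (x = e)) as [->|Hne].
        + exists j. split; [exact Hj|]. intro; congruence.
        + destruct (HRc x) as [k Hk]. exists k. split; auto. }
    apply (spanning_indep_sub (M i) (R' i) (R i) e (Ht R' Hc i e)).
    + intros [_ H]. apply (H eq_refl); reflexivity.
    + exact Hi.
    + intros x [Hx _]; exact Hx.
    + apply HRi.
  - intro i. split; [apply HRi|].
    intros B HB HsB x Hx. destruct (classic (R i x)) as [H|H]; auto.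
    exfalso. apply (spanning_indep_sub (M i) (R i) B x (Ht R (conj HRi HRc) i x) H Hx HsB HB).
Qed.
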